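(* Let inputs represent tuples of $C$ categorical components via a compositionally structured input representation with kernel value $\kappa_k$ for pairs of inputs sharing exactly $k$ components, where $\kappa_0<\kappa_k<\kappa_C$ for $0<k<C$. Pass these inputs through an infinite-width random neural network with (leaky) ReLU nonlinearity $\sigma(u)=A\min(u,0)+\max(u,0)$, $A\in[0,1)$, whose layer-$l$ kernel is given recursively by $K^{(0)}=K$ and $$K^{(l+1)}(x,x')=s^2\sqrt{K^{(l)}(x,x)K^{(l)}(x',x')}\;k\!\left(\frac{K^{(l)}(x,x')}{\sqrt{K^{(l)}(x,x)K^{(l)}(x',x')}}\right),\quad k(u)=\frac{(1-A)^2}{2\pi}\Big(\sqrt{1-u^2}+(\pi-\cos^{-1}u)\,u\Big)+Au,$$ with $s^2>0$ the weight variance. Let $S^{(L)}(k;C)$ denote the representational salience of overlap $k$ in layer $L$. Then as $L\to\infty$, $S^{(L)}(k;C)\to 0$ for every $k<C$ and $S^{(L)}(C;C)\to 1$.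
   Context: A representation is compositionally structured if the similarity of two inputs depends only on the number of shared components; each layer $K^{(l)}$ is then also compositionally structured, with similarity $\kappa^{(l)}_{|J|}$ for inputs sharing exactly the components in $J$. Representational salience of such a kernel: define recursively $\overline{S}(\emptyset):=\kappa_0$, $\overline{S}(J):=\kappa_{|J|}-\sum_{J'\subsetneq J}\overline{S}(J')$ for $J\subseteq\{1,\dots,C\}$, and $S(J):=\overline{S}(J)/\sum_{\emptyset\ne J'\subseteq\{1,\dots,C\}}\overline{S}(J')$; since this depends only on $|J|$, write $S(k;C):=S(J)$ for $|J|=k$. *)

(* Defs.v *)
From HB Require Import structures.
From mathcomp Require Import all_boot all_order all_algebra.
From mathcomp Require Import all_classical all_reals all_analysis.
Set Implicit Arguments. Unset Strict Implicit. Unset Printing Implicit Defensive.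
Import Order.TTheory GRing.Theory Num.Theory.
Local Open Scope ring_scope.

Section Defs.
Variable R : realType.

Definition relu_k (A u : R) : R :=
  (1 - A) ^+ 2 / (2 * pi) * (Num.sqrt (1 - u ^+ 2) + (pi - acos u) * u) + A * u.

(* One layer of the infinite-width network acting on a compositionally
   structured kernel, encoded by its values kap k (k = 0..C shared components).
   The diagonal value K(x,x) is kap C for every input x. *)
Definition next_layer (C : nat) (s2 A : R) (kap : nat -> R) : nat -> R :=
  fun k => s2 * Num.sqrt (kap C * kap C) *
           relu_k A (kap k / Num.sqrt (kap C * kap C)).

Fixpoint layer_kernel (C : nat) (s2 A : R) (kap : nat -> R) (L : nat) : nat -> R :=
  match L with
  | 0 => kap
  | L'.+1 => next_layer C s2 A (layer_kernel C s2 A kap L')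
  end.

Fixpoint Sbar_fuel (C : nat) (kap : nat -> R) (n : nat) (J : {set 'I_C}) : R :=
  match n with
  | 0 => kap 0%N
  | n'.+1 => kap #|J| - \sum_(J' : {set 'I_C} | J' \proper J) Sbar_fuel kap n' J'
  end.

Definition Sbar (C : nat) (kap : nat -> R) (J : {set 'I_C}) : R :=
  Sbar_fuel kap (#|J|).+1 J.

Definition salience (C : nat) (kap : nat -> R) (J : {set 'I_C}) : R :=
  Sbar kap J / \sum_(J' : {set 'I_C} | J' != finset.set0) Sbar kap J'.

(* S(k;C) := S(J) for the representative J = {first k components}, |J| = k for k <= C *)
Definition salience_k (C : nat) (kap : nat -> R) (k : nat) : R :=
  salience kap [set i : 'I_C | (i < k)%N].

End Defs.

Arguments relu_k {R} A u.
Arguments next_layer {R} C s2 A kap k.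
Arguments layer_kernel {R} C s2 A kap L k.
Arguments Sbar_fuel {R} C kap n J.
Arguments Sbar {R} C kap J.
Arguments salience {R} C kap J.
Arguments salience_k {R} C kap k.

(* Main.v *)
Require Import Defs.
From HB Require Import structures.
From mathcomp Require Import all_boot all_order all_algebra.
From mathcomp Require Import all_classical all_reals all_analysis.
From mathcomp Require Import ring lra.
Import Order.TTheory GRing.Theory Num.Theory.
Import numFieldNormedType.Exports.
Local Open Scope classical_set_scope.
Local Open Scope ring_scope.

Section Trig.
Variable R : realType.

Lemma cont_of_deriv (f df : R -> R) : (forall x : R, is_derive x (1:R) f (df x)) -> continuous f.
Proof. move=> H x; apply/differentiable_continuous/derivable1_diffP; exact: ex_derive. Qed.

Lemma mono_deriv (f df : R -> R) (a b : R) : (forall x : R, is_derive x (1:R) f (df x)) ->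
  (forall x, a < x < b -> 0 <= df x) ->
  forall x y, a <= x -> x <= y -> y <= b -> f x <= f y.
Proof.
move=> H Hd; apply: ger0_derive1_ndecr.
- move=> x _; exact: ex_derive.
- move=> x; rewrite in_itv /= => /Hd; by rewrite derive1E derive_val.
- apply: continuous_subspaceT; exact: cont_of_deriv H.
Qed.

Lemma smono_deriv (f df : R -> R) (a b : R) : (forall x : R, is_derive x (1:R) f (df x)) ->
  (forall x, a < x < b -> 0 < df x) ->
  forall x y, a <= x -> x < y -> y <= b -> f x < f y.
Proof.
move=> H Hd; apply: gtr0_derive1_incr.
- move=> x _; exact: ex_derive.
- move=> x; rewrite in_itv /= => /Hd; by rewrite derive1E derive_val.
- apply: continuous_subspaceT; exact: cont_of_deriv H.
Qed.

Lemma amono_deriv (f df : R -> R) (a b : R) : (forall x : R, is_derive x (1:R) f (df x)) ->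
  (forall x, a < x < b -> df x <= 0) ->
  forall x y, a <= x -> x <= y -> y <= b -> f y <= f x.
Proof.
move=> H Hd; apply: ler0_derive1_nincr.
- move=> x _; exact: ex_derive.
- move=> x; rewrite in_itv /= => /Hd; by rewrite derive1E derive_val.
- apply: continuous_subspaceT; exact: cont_of_deriv H.
Qed.

Lemma dS (x : R) : is_derive x 1 (fun t : R => t - sin t) (1 - cos x).
Proof. apply: is_deriveB. Qed.

Lemma dG (x : R) : is_derive x 1 (fun t : R => sin t - t * cos t) (x * sin x).
Proof.
have -> : x * sin x = cos x - (x * (- sin x) + cos x * 1) by ring.
apply: is_deriveB.
Qed.

Lemma dH (x : R) : is_derive x 1 (fun t : R => sin t + (pi - t) * cos t) (- ((pi - x) * sin x)).
Proof.
have -> : - ((pi - x) * sin x) = cos x + ((pi - x) * (- sin x) + cos x * (0 - 1)) by ring.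
apply: is_deriveD; apply: is_deriveM; apply: is_deriveB.
Qed.

Lemma sin_le_id {t : R} : 0 <= t -> sin t <= t.
Proof.
move=> t0.
have := @mono_deriv _ _ 0 t dS _ 0 t (lexx _) t0 (lexx _).
rewrite sin0 subr0 subr_ge0; apply.
move=> x _; rewrite subr_ge0; exact: cos_le1.
Qed.

Lemma G_lt (x y : R) : 0 <= x -> x < y -> y <= pi ->
  sin x - x * cos x < sin y - y * cos y.
Proof.
move=> x0 xy ypi.
apply: (@smono_deriv _ _ 0 pi dG) => //.
move=> z /andP[z0 zpi]; apply: mulr_gt0 => //; apply: sin_gt0_pi; by rewrite z0.
Qed.

Lemma H_le (x y : R) : 0 <= x -> x <= y -> y <= pi ->
  sin y + (pi - y) * cos y <= sin x + (pi - x) * cos x.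
Proof.
move=> x0 xy ypi.
apply: (@amono_deriv _ _ 0 pi dH) => //.
move=> z /andP[z0 zpi]; rewrite oppr_le0; apply: mulr_ge0.
  rewrite subr_ge0; exact: ltW.
apply: sin_ge0_pi; rewrite !ltW //.
Qed.

Lemma in_m11 {x : R} : -1 <= x <= 1 -> x \in `[(-1), 1].
Proof. by rewrite in_itv. Qed.

Lemma acos_in {x : R} : -1 <= x <= 1 -> acos x \in `[0, pi].
Proof. by move=> h; rewrite in_itv /= acos_ge0 // acos_lepi. Qed.

Lemma acos_anti {x y : R} : -1 <= x -> x <= y -> y <= 1 -> acos y <= acos x.
Proof.
move=> x1 xy y1.
have hx : -1 <= x <= 1 by rewrite x1 (le_trans xy y1).
have hy : -1 <= y <= 1 by rewrite y1 (le_trans x1 xy).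
rewrite leNgt; apply/negP => lt.
have := ltr_cos (acos_in hx) (acos_in hy).
rewrite lt !acosK ?in_m11 // => yx.
by move: (lt_le_trans yx xy); rewrite ltxx.
Qed.

Definition gg (x : R) := Num.sqrt (1 - x ^+ 2) - x * acos x.

Lemma gg_G (x : R) : -1 <= x <= 1 ->
  gg x = sin (acos x) - acos x * cos (acos x).
Proof. by move=> h; rewrite /gg sin_acos // acosK ?in_m11 // mulrC. Qed.

Lemma gg_pos (x : R) : -1 <= x < 1 -> 0 < gg x.
Proof.
move=> /andP[x1 x2].
have h : -1 <= x <= 1 by rewrite x1 ltW.
rewrite gg_G //.
have := @G_lt 0 (acos x) (lexx _) (acos_gt0 _) (acos_lepi h).
by rewrite sin0 mul0r subr0; apply; rewrite x1.
Qed.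

Lemma gg_anti (x y : R) : -1 <= x -> x <= y -> y <= 1 -> gg y <= gg x.
Proof.
move=> x1 xy y1.
have hx : -1 <= x <= 1 by rewrite x1 (le_trans xy y1).
have hy : -1 <= y <= 1 by rewrite y1 (le_trans x1 xy).
rewrite !gg_G //.
have := acos_anti x1 xy y1; rewrite le_eqVlt => /orP[/eqP->//|lt].
apply: ltW; apply: G_lt => //; [exact: acos_ge0 | exact: acos_lepi].
Qed.

Lemma gg_le (x : R) : -1 <= x <= 1 -> gg x <= acos x * (1 - x).
Proof.
move=> h; rewrite gg_G //.
have := sin_le_id (acos_ge0 h).
rewrite acosK ?in_m11 //; lra.
Qed.

Lemma gg_ge0 (x : R) : -1 <= x <= 1 -> 0 <= gg x.
Proof.
move=> /andP[x1 x2]; case: (ltP x 1) => xl.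
  by apply: ltW; apply: gg_pos; rewrite x1.
have -> : x = 1 by apply/eqP; rewrite eq_le x2.
by rewrite /gg expr1n subrr sqrtr0 acos1 mulr0 subr0.
Qed.

End Trig.
Arguments gg {R}.
Arguments gg_le {R x}. Arguments gg_ge0 {R x}. Arguments gg_pos {R x}. Arguments gg_anti {R x y}.
Arguments in_m11 {R x}. Arguments acos_in {R x}. Arguments acos_anti {R x y}. Arguments sin_le_id {R t}.

Section Relu.
Variable R : realType.
Variable A : R.
Hypothesis hA0 : 0 <= A.
Hypothesis hA1 : A < 1.

Definition cc : R := (1 - A) ^+ 2 / (2 * pi).
Definition k1 : R := (1 + A ^+ 2) / 2.

Lemma pi_neq0 : (pi : R) != 0.
Proof. by rewrite gt_eqF // pi_gt0. Qed.

Lemma cc_gt0 : 0 < cc.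
Proof.
rewrite /cc; apply: divr_gt0; last by apply: mulr_gt0 => //; exact: pi_gt0.
by apply: exprn_gt0; rewrite subr_gt0.
Qed.

Lemma k1_gt0 : 0 < k1.
Proof. rewrite /k1; apply: divr_gt0 => //; apply: ltr_wpDr => //; exact: sqr_ge0. Qed.

Lemma relu1 : relu_k A 1 = k1.
Proof.
rewrite /relu_k expr1n subrr sqrtr0 acos1 add0r subr0 mulr1 /k1.
move: pi_neq0; move: (pi : R) => p hp; field; by rewrite hp.
Qed.

Lemma reluN1 : relu_k A (-1) = - A.
Proof.
rewrite /relu_k sqrrN expr1n subrr sqrtr0 acosN1 subrr add0r mul0r mulr0 add0r.
by rewrite mulrN1.
Qed.

Lemma relu_gg (u : R) : relu_k A u - k1 * u = cc * gg u.
Proof.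
rewrite /relu_k /cc /gg /k1.
move: pi_neq0; move: (pi : R) => p hp; field; by rewrite hp.
Qed.

Lemma relu_mono (u v : R) : -1 <= u -> u <= v -> v <= 1 -> relu_k A u <= relu_k A v.
Proof.
move=> u1 uv v1.
have hu : -1 <= u <= 1 by rewrite u1 (le_trans uv v1).
have hv : -1 <= v <= 1 by rewrite v1 (le_trans u1 uv).
rewrite /relu_k; apply: lerD; last by apply: ler_wpM2l.
apply: ler_wpM2l; first exact: ltW cc_gt0.
rewrite -(@sin_acos R u hu) -(@sin_acos R v hv).
rewrite -{3}(acosK (in_m11 hu)) -{3}(acosK (in_m11 hv)).
apply: H_le; [exact: acos_ge0 | exact: acos_anti | exact: acos_lepi].
Qed.


Definition kk : R := cc / k1.
Definition ff (x : R) : R := relu_k A x / k1.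

Lemma kk_gt0 : 0 < kk.
Proof. exact: divr_gt0 cc_gt0 k1_gt0. Qed.

Lemma kk_pi : kk * pi <= 1.
Proof.
have -> : kk * pi = (1 - A) ^+ 2 / (1 + A ^+ 2).
  rewrite /kk /cc /k1; move: pi_neq0; move: (pi : R) => p hp.
  have hA : 1 + A ^+ 2 != 0 by apply: lt0r_neq0; apply: ltr_wpDr => //; exact: sqr_ge0.
  by field; rewrite hp hA.
rewrite ler_pdivrMr; last by apply: ltr_wpDr => //; exact: sqr_ge0.
rewrite mul1r sqrrB expr1n mul1r mulr2n; rewrite -subr_ge0; have -> : 1 + A ^+ 2 - (1 - (A + A) + A ^+ 2) = A + A by ring. by rewrite addr_ge0.
Qed.

Lemma ff_sub (x : R) : ff x - x = kk * gg x.
Proof.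
rewrite /ff /kk mulrAC -(relu_gg x) /k1.
have hA : 1 + A ^+ 2 != 0 by apply: lt0r_neq0; apply: ltr_wpDr => //; exact: sqr_ge0.
by field; rewrite hA.
Qed.

Lemma ff_ge {x : R} : -1 <= x <= 1 -> x <= ff x.
Proof.
move=> h; rewrite -subr_ge0 ff_sub; apply: mulr_ge0; first exact: ltW kk_gt0.
exact: gg_ge0.
Qed.

Lemma ff_mono (u v : R) : -1 <= u -> u <= v -> v <= 1 -> ff u <= ff v.
Proof.
move=> *; rewrite /ff ler_pM2r; last by rewrite invr_gt0 k1_gt0.
exact: relu_mono.
Qed.

Lemma ff1 : ff 1 = 1.
Proof. by rewrite /ff relu1 divff // lt0r_neq0 // k1_gt0. Qed.

Lemma ff_le1 {x : R} : -1 <= x <= 1 -> ff x <= 1.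
Proof. by move=> /andP[x1 x2]; rewrite -ff1; apply: ff_mono. Qed.

Lemma ff_bound {x : R} : -1 <= x <= 1 -> (1 - x) * (1 - kk * acos x) <= 1 - ff x.
Proof.
move=> h.
have e : 1 - ff x = (1 - x) - kk * gg x by rewrite -ff_sub; ring.
rewrite e.
have := gg_le h.
have hk := kk_gt0.
have h1 : 0 <= 1 - x by case/andP: h => _ ?; rewrite subr_ge0.
move=> hg.
have : kk * gg x <= kk * (acos x * (1 - x)) by apply: ler_wpM2l => //; exact: ltW.
nra.
Qed.

Lemma ff_lt1 {x : R} : -1 <= x < 1 -> ff x < 1.
Proof.
move=> /andP[x1 x2].
case: (ltP (-1) x) => hx.
  have h : -1 <= x <= 1 by rewrite x1 ltW.
  have := ff_bound h.
  have ha : acos x < pi by apply: acos_ltpi; rewrite hx ltW.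
  have hk := kk_gt0; have hkp := kk_pi.
  have : kk * acos x < kk * pi by rewrite ltr_pM2l.
  have : 0 < 1 - x by rewrite subr_gt0.
  move=> *; nra.
have -> : x = -1 by apply/eqP; rewrite eq_le x1 hx.
rewrite /ff reluN1; apply: (@le_lt_trans _ _ 0) => //.
rewrite mulNr oppr_le0; apply: divr_ge0 => //; exact: ltW k1_gt0.
Qed.

Lemma iter_in {x : R} n : -1 <= x < 1 -> -1 <= iter n ff x < 1.
Proof.
move=> h; elim: n => // n /andP[IH1 IH2] /=.
have hh : -1 <= iter n ff x <= 1 by rewrite IH1 ltW.
rewrite ff_lt1 ?IH1 // andbT; exact: le_trans IH1 (ff_ge hh).
Qed.

Lemma iter_mono (u v : R) n : -1 <= u -> u <= v -> v < 1 -> iter n ff u <= iter n ff v.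
Proof.
move=> u1 uv v1.
have hu : -1 <= u < 1 by rewrite u1 (le_lt_trans uv v1).
have hv : -1 <= v < 1 by rewrite v1 (le_trans u1 uv).
elim: n => // n IH /=.
case/andP: (iter_in n hu) => a1 a2; case/andP: (iter_in n hv) => b1 b2.
apply: ff_mono => //; exact: ltW.
Qed.

Lemma iter_incr {x : R} n m : -1 <= x < 1 -> (n <= m)%N -> iter n ff x <= iter m ff x.
Proof.
move=> h; elim: m => [|m IH]; first by rewrite leqn0 => /eqP ->.
rewrite leq_eqVlt => /orP[/eqP -> //|]; rewrite ltnS => /IH hle.
apply: le_trans hle _ => /=.
case/andP: (iter_in m h) => a1 a2; apply: ff_ge; rewrite a1 ltW //.
Qed.

Lemma iter_reach {x : R} (y : R) : -1 <= x < 1 -> y < 1 -> exists N, y < iter N ff x.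
Proof.
move=> hx y1.
case: (pselect (exists N, y < iter N ff x)) => // hn; exfalso.
have hN : forall N, iter N ff x <= y.
  by move=> N; rewrite leNgt; apply/negP => H; apply: hn; exists N.
have y0 : -1 <= y by have /andP[? _] := iter_in 0 hx; exact: le_trans (hN 0%N).
have hy : -1 <= y < 1 by rewrite y0 y1.
pose d := kk * gg y.
have d0 : 0 < d by apply: mulr_gt0; [exact: kk_gt0 | exact: gg_pos].
have step : forall N, iter N ff x + d <= iter N.+1 ff x.
  move=> N /=; rewrite -lerBrDl ff_sub /d; apply: ler_wpM2l; first exact: ltW kk_gt0.
  case/andP: (iter_in N hx) => a1 a2; apply: gg_anti => //; last exact: ltW.
have grow : forall N, -1 + N%:R * d <= iter N ff x.
  elim=> [|N IH]; first by rewrite mul0r addr0; case/andP: (iter_in 0 hx).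
  apply: le_trans (step N); rewrite -natr1 mulrDl mul1r addrA lerD2r //.
pose M := Num.bound (2 / d).
have hM : 2 / d < M%:R by apply: archi_boundP; apply: divr_ge0 => //; exact: ltW.
have := grow M; have /andP[_ hlt] := iter_in M hx.
have : 2 < M%:R * d by rewrite -ltr_pdivrMr.
move=> *; lra.
Qed.

Lemma iter_cvg (x : R) : -1 <= x < 1 -> iter n ff x @[n --> \oo] --> (1 : R).
Proof.
move=> hx; apply/cvgrPdist_lt => e e0.
have e1 : 1 - e < 1 by rewrite ltrBlDr ltrDl.
have [N hN] := iter_reach (1 - e) hx e1.
near=> n.
have hn : (N <= n)%N by near: n; exists N.
have := iter_incr N n hx hn; have /andP[_ h1] := iter_in n hx.
move=> h2; rewrite ger0_norm; last by rewrite subr_ge0 ltW.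
lra.
Unshelve. all: end_near.
Qed.


Definition eps (x : R) (n : nat) : R := 1 - iter n ff x.

Lemma eps_gt0 {x : R} n : -1 <= x < 1 -> 0 < eps x n.
Proof. by move=> hx; rewrite /eps subr_gt0; case/andP: (iter_in n hx). Qed.

Lemma acos_iter_cvg {x : R} : -1 <= x < 1 -> acos (iter n ff x) @[n --> \oo] --> (0 : R).
Proof.
move=> hx; apply/cvgrPdist_lt => e e0.
pose d := Num.min e pi / 2.
have m0 : 0 < Num.min e pi by rewrite lt_min e0 pi_gt0.
have d0 : 0 < d by rewrite /d divr_gt0.
have de : d < e.
  apply: (@lt_le_trans _ _ (Num.min e pi)); first by rewrite /d ltr_pdivrMr // ltr_pMr // ltr1n.
  by rewrite ge_min lexx.
have dpi : d <= pi.
  apply: (@le_trans _ _ (Num.min e pi)); first by rewrite /d ler_pdivrMr // ler_pMr // ler1n.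
  by rewrite ge_min lexx orbT.
have dI : d \in `[0, pi] by rewrite in_itv /= ltW.
have zI : (0 : R) \in `[0, pi] by rewrite in_itv /= lexx pi_ge0.
have cd : cos d < 1 by rewrite -cos0 (ltr_cos zI dI).
have [N hN] := iter_reach (cos d) hx cd.
near=> n.
have hn : (N <= n)%N by near: n; exists N.
have := iter_incr N n hx hn; have /andP[h0 h1] := iter_in n hx.
move=> h2.
have hc : -1 <= cos d := cos_geN1 d.
have := @acos_anti R (cos d) (iter n ff x) hc (ltW (lt_le_trans hN h2)) (ltW h1).
rewrite cosK // => ha.
rewrite sub0r normrN ger0_norm; last by apply: acos_ge0; rewrite h0 ltW.
exact: le_lt_trans ha de.
Unshelve. all: end_near.
Qed.

Lemma ratio_cvg {x : R} : -1 <= x < 1 -> eps x n.+1 / eps x n @[n --> \oo] --> (1 : R).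
Proof.
move=> hx.
apply: (squeeze_cvgr (f := fun n => 1 - kk * acos (iter n ff x)) (h := fun _ => 1)).
- near=> n.
  have e0 := eps_gt0 n hx.
  have /andP[h0 h1] := iter_in n hx.
  apply/andP; split.
    rewrite ler_pdivlMr // mulrC /eps /=.
    apply: ff_bound; rewrite h0 ltW //.
  rewrite ler_pdivrMr // mul1r /eps lerD2l lerN2.
  exact: iter_incr.
- have L : (fun n => 1 - kk * acos (iter n ff x)) @ \oo --> (1 - kk * 0 : R).
    apply: cvgB; first exact: cvg_cst.
    apply: cvgM; first exact: cvg_cst.
    exact: acos_iter_cvg.
  by rewrite mulr0 subr0 in L.
- exact: cvg_cst.
Unshelve. all: end_near.
Qed.

Lemma shift_cvg {x : R} m : -1 <= x < 1 -> eps x (n + m) / eps x n @[n --> \oo] --> (1 : R).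
Proof.
move=> hx; elim: m => [|m IH].
  have -> : (fun n => eps x (n + 0) / eps x n) = (fun _ => 1).
    apply/funext => n; rewrite addn0 divff //; exact: lt0r_neq0 (eps_gt0 n hx).
  exact: cvg_cst.
have -> : (fun n => eps x (n + m.+1) / eps x n) =
   (fun n => eps x (n + m).+1 / eps x (n + m) * (eps x (n + m) / eps x n)).
  apply/funext => n; rewrite addnS mulrA divfK //; exact: lt0r_neq0 (eps_gt0 _ hx).
have -> : (1 : R) = 1 * 1 by rewrite mulr1.
apply: cvgM => //.
have := ratio_cvg hx; rewrite -(cvg_shiftn m) /=.
by [].
Qed.

Lemma cmp_cvg {x y : R} : -1 <= x -> x <= y -> y < 1 ->
  eps y n / eps x n @[n --> \oo] --> (1 : R).
Proof.
move=> x1 xy y1.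
have hx : -1 <= x < 1 by rewrite x1 (le_lt_trans xy y1).
have hy : -1 <= y < 1 by rewrite y1 (le_trans x1 xy).
have [m hm] := iter_reach y hx y1.
apply: (squeeze_cvgr (f := fun n => eps x (n + m) / eps x n) (h := fun _ => 1)).
- near=> n.
  have e0 := eps_gt0 n hx.
  apply/andP; split.
    rewrite ler_pdivrMr // divfK; last exact: lt0r_neq0.
    rewrite /eps lerD2l lerN2 iterD.
    have /andP[_ hb] := iter_in m hx.
    apply: iter_mono => //; last exact: ltW.
    by case/andP: hy.
  rewrite ler_pdivrMr // mul1r /eps lerD2l lerN2.
  exact: iter_mono.
- exact: shift_cvg.
- exact: cvg_cst.
Unshelve. all: end_near.
Qed.

End Relu.
Arguments Sbar : simpl never.
Section Sal.
Variable R : realType.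
Variable C : nat.
Implicit Types (u v : nat -> R) (J : {set 'I_C}).

Lemma cardJ_le J : (#|J| <= C)%N.
Proof. by rewrite -[X in (_ <= X)%N]card_ord max_card. Qed.

Lemma Sbar_lin u v (a b : R) n J :
  Sbar_fuel C (fun j => a * u j + b * v j) n J = a * Sbar_fuel C u n J + b * Sbar_fuel C v n J.
Proof.
elim: n J => [|n IH] J //=.
rewrite (eq_bigr (fun J' => a * Sbar_fuel C u n J' + b * Sbar_fuel C v n J')); last by move=> *; rewrite IH.
rewrite big_split /= -!mulr_sumr; ring.
Qed.

Lemma Sbar_one n J : (#|J| < n)%N -> Sbar_fuel C (fun _ => (1 : R)) n J = (J == finset.set0)%:R :> R.
Proof.
elim: n J => [|n IH] J //= hJ.
rewrite (eq_bigr (fun J' => (J' == finset.set0)%:R)); last first.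
  move=> J' hJ'; apply: IH; exact: leq_trans (proper_card hJ') hJ.
case: (eqVneq J finset.set0) => [->|hne].
  rewrite big1 ?subr0 //= => J' /proper_card; by rewrite cards0 ltn0.
rewrite (bigD1 (finset.set0 : {set 'I_C})) /=; last by rewrite proper0.
rewrite eqxx big1 ?addr0 ?subrr // => J' /andP[_ /negbTE ->] //.
Qed.

Lemma Sbar_delta n J : (#|J| < n)%N ->
  Sbar_fuel C (fun j => (j == C)%:R : R) n J = (J == finset.setT)%:R :> R.
Proof.
elim: n J => [|n IH] J //= hJ.
rewrite big1 ?subr0; last first.
  move=> J' hJ'; rewrite IH; last exact: leq_trans (proper_card hJ') hJ.
  case: (eqVneq J' finset.setT) => // e; move: (proper_card hJ'); rewrite e cardsT card_ord.
  by rewrite ltnNge cardJ_le.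
congr (_ %:R); rewrite eqEcard finset.subsetT cardsT card_ord /=.
by rewrite eqn_leq cardJ_le.
Qed.

Lemma Sbar_fuel_indep u n m J : (#|J| < n)%N -> (#|J| < m)%N ->
  Sbar_fuel C u n J = Sbar_fuel C u m J.
Proof.
elim: n m J => [|n IH] [|m] J //= hn hm.
congr (_ - _); apply: eq_bigr => J' hJ'.
apply: IH; [exact: leq_trans (proper_card hJ') hn | exact: leq_trans (proper_card hJ') hm].
Qed.

Lemma Sbar_local u v n J : (forall j, (j <= C)%N -> u j = v j) ->
  Sbar_fuel C u n J = Sbar_fuel C v n J.
Proof.
move=> huv; elim: n J => [|n IH] J /=; first by apply: huv.
rewrite huv ?cardJ_le //; congr (_ - _); apply: eq_bigr => J' _; exact: IH.
Qed.

Lemma cvg_bigsum (I : eqType) (r : seq I) (P : pred I) (F : I -> nat -> R) (l : I -> R) :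
  (forall i, F i L @[L --> \oo] --> l i) ->
  \sum_(i <- r | P i) F i L @[L --> \oo] --> \sum_(i <- r | P i) l i.
Proof.
move=> H; elim: r => [|i r IH].
  rewrite big_nil; under eq_fun do rewrite big_nil; exact: cvg_cst.
rewrite big_cons; under eq_fun do rewrite big_cons.
case: (P i) => //; exact: cvgD.
Qed.

Lemma Sbar_cvg (u : nat -> nat -> R) v n J :
  (forall j, (j <= C)%N -> u L j @[L --> \oo] --> v j) ->
  Sbar_fuel C (u L) n J @[L --> \oo] --> Sbar_fuel C v n J.
Proof.
move=> huv; elim: n J => [|n IH] J /=; first exact: huv.
apply: cvgB; first by apply: huv; exact: cardJ_le.
exact: cvg_bigsum.
Qed.

Lemma Sbar_denom u : \sum_(J : {set 'I_C} | J != finset.set0) Sbar C u J = u C - u 0%N.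
Proof.
have h0 : Sbar C u finset.set0 = u 0%N.
  rewrite /Sbar /= cards0 big1 ?subr0 // => J' /proper_card; by rewrite cards0 ltn0.
have hT : Sbar C u finset.setT = u C - \sum_(J : {set 'I_C} | J \proper finset.setT) Sbar C u J.
  rewrite {1}/Sbar cardsT card_ord /= cardsT card_ord; congr (_ - _); apply: eq_bigr => J hJ.
  apply: Sbar_fuel_indep => //.
  by have := proper_card hJ; rewrite cardsT card_ord.
have hall : \sum_(J : {set 'I_C}) Sbar C u J = u C.
  rewrite (bigD1 (finset.setT : {set 'I_C})) //= hT.
  under [X in _ + X = _]eq_bigl do rewrite -properT.
  ring.
have := hall; rewrite (bigD1 (finset.set0 : {set 'I_C})) //= h0 => e.
rewrite -e; ring.
Qed.

End Sal.

Section Main.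
Variable R : realType.
Variables (C : nat) (kap : nat -> R) (s2 A : R).
Hypothesis hC : (0 < C)%N.
Hypothesis hs : 0 < s2.
Hypothesis hA0 : 0 <= A.
Hypothesis hA1 : A < 1.
Hypothesis h0C : kap 0%N < kap C.
Hypothesis hmid : forall k, (0 < k < C)%N -> kap 0%N < kap k /\ kap k < kap C.
Hypothesis hneg : - kap C <= kap 0%N.

Let ker L := layer_kernel C s2 A kap L.

Lemma kC : 0 < kap C.
Proof. have h := le_lt_trans hneg h0C. move: h h0C hneg; lra. Qed.

Lemma ker_step L j : ker L.+1 j =
  s2 * Num.sqrt (ker L C * ker L C) * relu_k A (ker L j / Num.sqrt (ker L C * ker L C)).
Proof. by []. Qed.

Lemma kerC_pos L : 0 < ker L C.
Proof.
elim: L => [|L IH]; first by rewrite /ker /=; exact: kC.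
rewrite ker_step -expr2 sqrtr_sqr ger0_norm ?ltW // divff ?lt0r_neq0 //.
rewrite relu1; apply: mulr_gt0; first exact: mulr_gt0.
exact: k1_gt0.
Qed.

Definition rho L j := ker L j / ker L C.

Lemma rho_step L j : rho L.+1 j = ff R A (rho L j).
Proof.
rewrite /rho !ker_step -expr2 sqrtr_sqr ger0_norm ?ltW ?kerC_pos //.
rewrite divff ?lt0r_neq0 ?kerC_pos // relu1 /ff.
have h1 := lt0r_neq0 (kerC_pos L); have h2 := lt0r_neq0 hs; have h3 := lt0r_neq0 (k1_gt0 R A).
rewrite /rho in h1 *; field; by rewrite h1 h2 h3.
Qed.

Lemma rho_iter L j : rho L j = iter L (ff R A) (rho 0 j).
Proof. by elim: L => // L IH; rewrite rho_step IH. Qed.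

Lemma rhoC L : rho L C = 1.
Proof. by rewrite /rho divff // lt0r_neq0 // kerC_pos. Qed.


Lemma rho00 : -1 <= rho 0 0%N < 1.
Proof.
have k := kC.
rewrite /rho /ker /= ler_pdivlMr // ltr_pdivrMr // mul1r h0C andbT mulN1r; exact: hneg.
Qed.

Lemma rho0j j : (j < C)%N -> rho 0 0%N <= rho 0 j /\ rho 0 j < 1.
Proof.
have k := kC.
move=> hj; case: (posnP j) => [->|j0]; first by split => //; case/andP: rho00.
have [a b] : kap 0%N < kap j /\ kap j < kap C by apply: hmid; rewrite j0 hj.
rewrite /rho /ker /=; split.
  by rewrite ler_pM2r ?invr_gt0 //; apply: ltW.
by rewrite ltr_pdivrMr // mul1r.
Qed.

Definition rr L j := (1 - rho L j) / (1 - rho L 0%N).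

Lemma e0_pos L : 0 < 1 - rho L 0%N.
Proof. rewrite rho_iter; exact: (@eps_gt0 R A hA0 hA1 _ L rho00). Qed.

Lemma sal_eq L (J : {set 'I_C}) : J != finset.set0 ->
  salience C (ker L) J = - Sbar C (rr L) J.
Proof.
move=> hJ.
set D := ker L C. set e := 1 - rho L 0%N.
have D0 : D != 0 by apply: lt0r_neq0; exact: kerC_pos.
have e0 : e != 0 by apply: lt0r_neq0; exact: e0_pos.
have hden : ker L C - ker L 0%N = D * e.
  have -> : ker L 0%N = D * rho L 0%N by rewrite /rho -/D mulrC divfK.
  by rewrite /e -/D; ring.
have hk : ker L = (fun j => D * (fun _ => (1 : R)) j + (- (D * e)) * rr L j).
  apply/funext => j.
  have -> : ker L j = D * rho L j by rewrite /rho -/D mulrC divfK.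
  rewrite /rr -/e /=; by field.
rewrite /salience Sbar_denom hden hk /Sbar Sbar_lin Sbar_one // (negbTE hJ) mulr0 add0r.
rewrite -/(Sbar C (rr L) J).
by field; rewrite D0 e0.
Qed.

Definition rinf (j : nat) : R := 1 * 1 + (-1) * (j == C)%:R.

Lemma rr_cvg j : (j <= C)%N -> rr L j @[L --> \oo] --> rinf j.
Proof.
rewrite leq_eqVlt => /orP[/eqP ->|hj].
  rewrite /rinf eqxx mul1r mulN1r subrr.
  have -> : (fun L => rr L C) = (fun _ => 0).
    by apply/funext => L; rewrite /rr rhoC subrr mul0r.
  exact: cvg_cst.
rewrite /rinf (ltn_eqF hj) mulr0 addr0 mulr1.
have -> : (fun L => rr L j) = (fun L => eps R A (rho 0 j) L / eps R A (rho 0 0%N) L).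
  by apply/funext => L; rewrite /rr /eps (rho_iter L j) (rho_iter L 0%N).
have [a b] := rho0j j hj.
case/andP: rho00 => c _.
exact: (@cmp_cvg R A hA0 hA1 _ _ c a b).
Qed.

Lemma sal_cvg (J : {set 'I_C}) : J != finset.set0 ->
  salience C (ker L) J @[L --> \oo] --> ((J == finset.setT)%:R : R).
Proof.
move=> hJ.
have -> : (fun L => salience C (ker L) J) = (fun L => - Sbar C (rr L) J).
  by apply/funext => L; rewrite sal_eq.
have -> : ((J == finset.setT)%:R : R) = - Sbar C rinf J.
  rewrite /Sbar /rinf Sbar_lin Sbar_one // Sbar_delta // (negbTE hJ) mulr0 add0r.
  by rewrite mulN1r opprK.
apply: cvgN; apply: Sbar_cvg => j hj; exact: rr_cvg.
Qed.

End Main.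
Theorem proposition4 (R : realType) (C : nat) (kap : nat -> R) (s2 A : R) :
  (0 < C)%N ->
  0 < s2 ->
  0 <= A -> A < 1 ->
  kap 0%N < kap C ->
  (forall k, (0 < k < C)%N -> kap 0%N < kap k /\ kap k < kap C) ->
  - kap C <= kap 0%N ->
  (forall k, (0 < k < C)%N ->
     salience_k C (layer_kernel C s2 A kap L) k @[L --> \oo] --> (0 : R)) /\
  (salience_k C (layer_kernel C s2 A kap L) C @[L --> \oo] --> (1 : R)).
Proof.
move=> hC hs hA0 hA1 h0C hmid hneg.
have key := @sal_cvg R C kap s2 A hs hA0 hA1 h0C hmid hneg.
split.
- move=> k /andP[k0 kC]; rewrite /salience_k.
  set J := [set i : 'I_C | (i < k)%N]%SET.
  have hJ0 : J != finset.set0.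
    apply/set0Pn; exists (Ordinal hC); by rewrite inE /= k0.
  have hJT : J != finset.setT.
    apply/eqP => e; have : (Ordinal kC) \in J by rewrite e inE.
    by rewrite inE /= ltnn.
  by have := key J hJ0; rewrite (negbTE hJT).
- rewrite /salience_k.
  have -> : [set i : 'I_C | (i < C)%N]%SET = finset.setT by apply/setP => i; rewrite !inE ltn_ord.
  have hJ0 : (finset.setT : {set 'I_C}) != finset.set0.
    apply/set0Pn; exists (Ordinal hC); by rewrite inE.
  by have := key _ hJ0; rewrite eqxx.
Qed.
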